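(* Let $Q$ be a commutative automorphic loop of nilpotency class $3$. Then for all $a,b,c,d\in Q$: \begin{align*} (ab,c,d)=&(a,c,d)(b,c,d)((a,c,d),a,b)((b,c,d),b,a)\\&\cdot((a,c,d),b,c)((b,c,d),a,c)((a,c,d),b,d)((b,c,d),a,d),\\ (a,b,cd)=&(a,b,c)(a,b,d)((a,b,c),c,d)((a,b,d),d,c)\\&\cdot((a,b,c),d,b)((a,b,d),c,b)((a,b,c),d,a)((a,b,d),c,a),\\ (a,bc,d)=&(a,b,d)(a,c,d)((a,b,d),b,c)((a,c,d),c,b)\\&\cdot((a,b,d),c,a)((a,c,d),b,a)((a,b,d),c,d)((a,c,d),b,d). \end{align*}
   Context: A loop is a set with a binary operation such that all left and right translations $L_a:b\mapsto ab$, $R_a:b\mapsto ba$ are bijections and there is a two-sided identity. The inner mapping group is the stabilizer of the identity in the group generated by all translations; $Q$ is automorphic if all inner mappings are automorphisms. The associator $(a,b,c)$ is defined by $(ab)c=(a(bc))(a,b,c)$; the notation $x\cdot y$ indicates lower priority of multiplication. The center $Z(Q)$ is the set of elements fixed by all inner mappings; $Z_0=1$, $Z_{i+1}(Q)$ is the preimage of $Z(Q/Z_i(Q))$, and $Q$ has nilpotency class $n$ if $Z_{n-1}(Q)\neq Q=Z_n(Q)$. In a commutative loop of nilpotency class $3$, all compounded associators (associators having an associator as one argument) are central. *)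

(* Defs.v *)
From mathcomp Require Import ssreflect ssrfun ssrbool.
From Stdlib Require Import ClassicalEpsilon.

Set Implicit Arguments.
Unset Strict Implicit.

Record loop := Loop {
  lcar :> Type;
  lmul : lcar -> lcar -> lcar;
  lone : lcar;
  lone_mul : forall x, lmul lone x = x;
  lmul_one : forall x, lmul x lone = x;
  lbijL : forall a, bijective (lmul a);
  lbijR : forall a, bijective (fun b => lmul b a)
}.

Arguments lmul {l}.
Notation "x ** y" := (lmul x y) (at level 40, left associativity).

Lemma bij_ex (T : Type) (f : T -> T) :
  bijective f -> exists g : T -> T, cancel f g /\ cancel g f.
Proof. by case=> g H1 H2; exists g. Qed.

Definition Ltr (Q : loop) (a : Q) : Q -> Q := fun b => a ** b.
Definition Rtr (Q : loop) (a : Q) : Q -> Q := fun b => b ** a.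

Definition ldiv (Q : loop) (a : Q) : Q -> Q :=
  proj1_sig (constructive_indefinite_description _ (bij_ex (lbijL a))).

(* associator: (ab)c = (a(bc)) (a,b,c) *)
Definition assoc (Q : loop) (a b c : Q) : Q :=
  ldiv (a ** (b ** c)) ((a ** b) ** c).

Inductive Mlt (Q : loop) : (Q -> Q) -> Prop :=
  | Mlt_L a : Mlt (Ltr a)
  | Mlt_R a : Mlt (Rtr a)
  | Mlt_id : Mlt id
  | Mlt_comp f g : Mlt f -> Mlt g -> Mlt (f \o g)
  | Mlt_inv f g : Mlt f -> cancel f g -> cancel g f -> Mlt g
  | Mlt_ext f g : Mlt f -> f =1 g -> Mlt g.

Definition inner (Q : loop) (f : Q -> Q) : Prop := Mlt f /\ f (lone Q) = lone Q.

Definition commutative_loop (Q : loop) : Prop := forall a b : Q, a ** b = b ** a.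

Definition automorphic (Q : loop) : Prop :=
  forall f, inner f -> forall x y : Q, f (x ** y) = f x ** f y.

(* Z_0 = 1; Z_{i+1} = preimage of Z(Q/Z_i), where
   Z(Q/Z_i) is the set of elements of Q/Z_i fixed by all inner mappings of
   Q/Z_i.  Inner mappings of Q/N are exactly the maps induced by inner
   mappings of Q, so x Z_i is central in Q/Z_i iff f(x) \in x Z_i for every
   inner mapping f of Q. *)
Fixpoint Zc (Q : loop) (i : nat) : Q -> Prop :=
  match i with
  | 0 => fun x => x = lone Q
  | S j => fun x => forall f, inner f -> exists n, Zc j n /\ f x = x ** n
  end.

Definition nilpotency_class (Q : loop) (n : nat) : Prop :=
  (exists x : Q, ~ Zc (n - 1) x) /\ (forall x : Q, Zc n x).

(* Main.v *)
Require Import Defs.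
From mathcomp Require Import ssreflect ssrfun ssrbool.
From mathcomp Require Import eqtype ssrnat seq.
From Stdlib Require Import ClassicalEpsilon.

Section CAL.
Variable Q : loop.
Hypothesis Hcomm : commutative_loop Q.
Hypothesis Haut : automorphic Q.
Hypothesis Hnil : forall x : Q, Zc 3 x.

Local Notation one := (lone Q).
Implicit Types a b c d x y z t u v w n m p q r s P : Q.

Lemma mul1x (x : Q) : one ** x = x. Proof. exact: lone_mul. Qed.
Lemma mulx1 (x : Q) : x ** one = x. Proof. exact: lmul_one. Qed.
Lemma mC (x y : Q) : x ** y = y ** x. Proof. exact: Hcomm. Qed.

Lemma ldiv_spec (a : Q) : cancel (lmul a) (ldiv a) /\ cancel (ldiv a) (lmul a).
Proof. rewrite /ldiv; by case: constructive_indefinite_description. Qed.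
Lemma ldivK (a x : Q) : ldiv a (a ** x) = x. Proof. by case: (ldiv_spec a) => H _; apply: H. Qed.
Lemma mulldiv (a y : Q) : a ** ldiv a y = y. Proof. by case: (ldiv_spec a) => _ H; apply: H. Qed.
Lemma lcan (a x y : Q) : a ** x = a ** y -> x = y.
Proof. by move=> H; rewrite -(ldivK a x) H ldivK. Qed.

Definition Rin (x y : Q) : Q -> Q := fun t => ldiv (x ** y) ((t ** x) ** y).

Lemma inner_Rin x y : inner (Rin x y).
Proof.
split; last by rewrite /Rin mul1x -{2}(mulx1 (x ** y)) ldivK.
apply: (@Mlt_ext _ (ldiv (x ** y) \o (Rtr y \o Rtr x))) => //.
apply: Mlt_comp; last by apply: Mlt_comp; apply: Mlt_R.
apply: (@Mlt_inv _ (Ltr (x ** y))); first exact: Mlt_L.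
- by move=> t; rewrite /Ltr ldivK.
- by move=> t; rewrite /Ltr mulldiv.
Qed.

Lemma Rin_spec x y t : (x ** y) ** Rin x y t = (t ** x) ** y.
Proof. by rewrite /Rin mulldiv. Qed.

Lemma Rin_aut x y s t : Rin x y (s ** t) = Rin x y s ** Rin x y t.
Proof. by apply: Haut; apply: inner_Rin. Qed.

Definition cen (z : Q) := forall f, inner f -> f z = z.

Lemma cen_Zc1 z : Zc 1 z <-> cen z.
Proof.
split=> H f Hf.
- by case: (H f Hf) => n [/= -> ->]; rewrite mulx1.
- by exists one; split => //=; rewrite mulx1 H.
Qed.

Lemma cen1 : cen one. Proof. by move=> f [_ ->]. Qed.
Lemma cenM z1 z2 : cen z1 -> cen z2 -> cen (z1 ** z2).
Proof. by move=> H1 H2 f Hf; rewrite Haut // H1 // H2. Qed.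

Lemma cenA1 z x y : cen z -> (z ** x) ** y = z ** (x ** y).
Proof.
move=> Hz; have := Rin_spec x y z; rewrite (Hz _ (inner_Rin x y)) => <-.
exact: mC.
Qed.
Lemma cenA2 z x y : cen z -> (x ** y) ** z = x ** (y ** z).
Proof.
move=> Hz; rewrite (mC (x ** y) z) (mC x (y ** z)) (mC y z) !cenA1 //.
by rewrite (mC y x).
Qed.
Lemma cenA3 z x y : cen z -> (x ** z) ** y = x ** (z ** y).
Proof.
move=> Hz; rewrite (mC x z) (mC x (z ** y)) !cenA1 //.
by rewrite (mC y x).
Qed.
Lemma rearr u v {n m} : cen n -> cen m -> (u ** n) ** (v ** m) = (u ** v) ** (n ** m).
Proof.
move=> Hn Hm.
rewrite (cenA3 n u (v ** m) Hn) -(cenA1 n v m Hn) (mC n v) (cenA3 n v m Hn).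
by rewrite (cenA2 (n ** m) u v (cenM n m Hn Hm)).
Qed.
Lemma cenAC P a b : cen a -> cen b -> (P ** a) ** b = (P ** b) ** a.
Proof. by move=> Ha Hb; rewrite (cenA2 b P a Hb) (cenA2 a P b Ha) (mC a b). Qed.

Lemma assocP a b c : (a ** b) ** c = (a ** (b ** c)) ** assoc a b c.
Proof. by rewrite /assoc mulldiv. Qed.
Lemma assoc_uniq a b c t : (a ** b) ** c = (a ** (b ** c)) ** t -> assoc a b c = t.
Proof. by move=> H; apply: (lcan (a ** (b ** c))); rewrite -assocP. Qed.

Definition z2 u := forall f, inner f -> exists n, cen n /\ f u = u ** n.
Lemma z2_Zc {u} : Zc 2 u -> z2 u.
Proof. by move=> H f Hf; case: (H f Hf) => n [/cen_Zc1 Hn E]; exists n. Qed.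

Lemma z2_cen z : cen z -> z2 z.
Proof. by move=> Hz f Hf; exists one; split; [exact: cen1|rewrite mulx1 Hz]. Qed.
Lemma z2M {u v} : z2 u -> z2 v -> z2 (u ** v).
Proof.
move=> Hu Hv f Hf; case: (Hu f Hf) => n [Hn Eu]; case: (Hv f Hf) => m [Hm Ev].
exists (n ** m); split; first exact: cenM.
by rewrite Haut // Eu Ev rearr.
Qed.

Lemma Rin_z2 {u} x y : z2 u -> cen (assoc u x y) /\ Rin x y u = u ** assoc u x y.
Proof.
move=> Hu; case: (Hu _ (inner_Rin x y)) => n [Hn E].
suff -> : assoc u x y = n by [].
apply: assoc_uniq; rewrite -Rin_spec E mC (cenA3 n u (x ** y) Hn).
by rewrite (mC n (x ** y)) (cenA2 n u (x ** y) Hn).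
Qed.
Lemma A_cen {u} x y : z2 u -> cen (assoc u x y).
Proof. by move=> Hu; case: (Rin_z2 x y Hu). Qed.

Lemma A_lin1 {u v} x y : z2 u -> z2 v -> assoc (u ** v) x y = assoc u x y ** assoc v x y.
Proof.
move=> Hu Hv; have Huv := z2M Hu Hv.
apply: (lcan (u ** v)); rewrite -(proj2 (Rin_z2 x y Huv)) Rin_aut.
rewrite (proj2 (Rin_z2 x y Hu)) (proj2 (Rin_z2 x y Hv)) rearr //; exact: A_cen.
Qed.

Lemma A_cen1 z x y : cen z -> assoc z x y = one.
Proof. by move=> Hz; apply: assoc_uniq; rewrite mulx1 cenA1. Qed.
Lemma A_cen2 z x y : cen z -> assoc x z y = one.
Proof. by move=> Hz; apply: assoc_uniq; rewrite mulx1 cenA3. Qed.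
Lemma A_cen3 z x y : cen z -> assoc x y z = one.
Proof. by move=> Hz; apply: assoc_uniq; rewrite mulx1 cenA2. Qed.

Lemma mulZ2 {u} x w : z2 u -> (x ** u) ** w = (x ** w) ** (u ** assoc u x w).
Proof.
move=> Hu; rewrite (mC x u) assocP (mC u (x ** w)).
by rewrite (cenA2 (assoc u x w) (x ** w) u (A_cen x w Hu)).
Qed.

Definition ishom (c : Q -> Q) := forall s t, c (s ** t) = c s ** c t.
Definition cenv (c : Q -> Q) := forall t, cen (c t).

Lemma transfer12 (f : Q -> Q) (g1 g2 : Q -> Q) : inner f -> cenv g1 -> cenv g2 ->
  (forall t, f t ** g1 t = t ** g2 t) -> ishom g1 -> ishom g2.
Proof.
move=> Hf H1 H2 E Hc s t; apply: (lcan (s ** t)).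
rewrite -E (Haut _ Hf) Hc -(rearr _ _ (H1 s) (H1 t)) E E.
by rewrite (rearr s t (H2 s) (H2 t)).
Qed.
Lemma transfer21 (f : Q -> Q) (g1 g2 : Q -> Q) : inner f -> cenv g1 -> cenv g2 ->
  (forall t, f t ** g1 t = t ** g2 t) -> ishom g2 -> ishom g1.
Proof.
move=> Hf H1 H2 E Hc s t; apply: (lcan (f (s ** t))).
rewrite E Hc -(rearr s t (H2 s) (H2 t)) -E -E (rearr _ _ (H1 s) (H1 t)).
by rewrite (Haut _ Hf).
Qed.

Lemma hom_kill (h : Q -> Q) p q r : cenv h -> ishom h -> h (assoc p q r) = one.
Proof.
move=> Hc Hh; apply: (lcan (h (p ** (q ** r)))).
rewrite -Hh -assocP mulx1 !Hh.
by rewrite (cenA2 (h r) (h p) (h q) (Hc r)).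
Qed.

Definition killed u := forall h : Q -> Q, cenv h -> ishom h -> (forall z, cen z -> h z = one) -> h u = one.
Lemma killed_assoc p q r : killed (assoc p q r).
Proof. by move=> h Hc Hh _; apply: hom_kill. Qed.
Lemma killed_cen z : cen z -> killed z.
Proof. by move=> Hz h _ _ H; apply: H. Qed.
Lemma killedM u v : killed u -> killed v -> killed (u ** v).
Proof. by move=> Hu Hv h H1 H2 H3; rewrite H2 Hu // Hv // mulx1. Qed.
Lemma killed_div {u z} : cen z -> killed (u ** z) -> killed u.
Proof.
move=> Hz Hu h H1 H2 H3; have := Hu h H1 H2 H3.
by rewrite H2 (H3 z Hz) mulx1.
Qed.

Lemma hom3 v x : z2 v -> ishom (fun t => assoc v x t).
Proof.
move=> Hv.
apply: (@transfer21 (Rin x v) _ (fun _ => one)) => //.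
- exact: inner_Rin.
- by move=> t; apply: A_cen.
- by move=> t; apply: cen1.
- move=> t; rewrite mulx1; apply: (lcan (x ** v)).
  rewrite -(cenA2 (assoc v x t) (x ** v) (Rin x v t) (A_cen x t Hv)) Rin_spec.
  by rewrite (mC (t ** x) v) (mC t x) (mC x v) (assocP v x t).
- by move=> s t; rewrite mulx1.
Qed.

Lemma K3 v x k : z2 v -> killed k -> assoc v x k = one.
Proof.
move=> Hv Hk; apply: (Hk (fun t => assoc v x t)).
- by move=> t; apply: A_cen.
- exact: hom3.
- by move=> z Hz; apply: A_cen3.
Qed.

Lemma rel2 v x t : z2 v -> Rin v x t ** assoc v x t = t ** assoc v t x.
Proof.
move=> Hv; apply: (lcan (v ** x)).
rewrite -(cenA2 _ _ _ (A_cen x t Hv)) -(cenA2 _ _ _ (A_cen t x Hv)) Rin_spec.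
rewrite (mC t v) (assocP v t x) (assocP v x t) (mC x t).
by apply: cenAC; apply: A_cen.
Qed.

Lemma hom2 v x : z2 v -> ishom (fun t => assoc v t x).
Proof.
move=> Hv.
apply: (@transfer12 (Rin v x) (fun t => assoc v x t)).
- exact: inner_Rin.
- by move=> t; apply: A_cen.
- by move=> t; apply: A_cen.
- by move=> t; apply: rel2.
- exact: hom3.
Qed.

Lemma K2 v x k : z2 v -> killed k -> assoc v k x = one.
Proof.
move=> Hv Hk; apply: (Hk (fun t => assoc v t x)).
- by move=> t; apply: A_cen.
- exact: hom2.
- by move=> z Hz; apply: A_cen2.
Qed.

Definition good u := z2 u /\ killed u.

Lemma K1 u v x : good u -> z2 v -> assoc u v x = one.
Proof.
move=> [Hu Hk] Hv; have := rel2 v x u Hv.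
rewrite (proj2 (Rin_z2 v x Hu)) (K3 v x u Hv Hk) (K2 v x u Hv Hk) mulx1.
by move=> H; apply: (lcan u); rewrite H mulx1.
Qed.

Lemma A_lin2 v s t x : z2 v -> assoc v (s ** t) x = assoc v s x ** assoc v t x.
Proof. by move=> Hv; have := hom2 v x Hv; apply. Qed.
Lemma A_lin3 v x s t : z2 v -> assoc v x (s ** t) = assoc v x s ** assoc v x t.
Proof. by move=> Hv; have := hom3 v x Hv; apply. Qed.

Lemma z2_assoc p q r : z2 (assoc p q r).
Proof.
case: (Hnil p _ (inner_Rin q r)) => n [Hn E].
have Hn2 := z2_Zc Hn.
suff -> : assoc p q r = n ** assoc n p (q ** r).
  by apply: z2M => //; apply: z2_cen; apply: A_cen.
apply: assoc_uniq; rewrite -Rin_spec E mC; exact: mulZ2.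
Qed.

Lemma good_assoc p q r : good (assoc p q r).
Proof. split; [exact: z2_assoc | exact: killed_assoc]. Qed.
Lemma good_cen z : cen z -> good z.
Proof. by move=> Hz; split; [exact: z2_cen | exact: killed_cen]. Qed.
Lemma goodM u v : good u -> good v -> good (u ** v).
Proof. by move=> [H1 H2] [H3 H4]; split; [exact: z2M | exact: killedM]. Qed.
Lemma good1 : good one. Proof. exact: good_cen cen1. Qed.

Lemma goodA X {v u} : z2 v -> good u -> (X ** v) ** u = X ** (v ** u).
Proof.
move=> Hv Hu.
have E : X ** (v ** u) = ((X ** v) ** u) ** assoc u v X.
  by rewrite (mC X (v ** u)) (mC v u) (assocP u v X) (mC (X ** v) u) (mC X v).
by rewrite E (K1 u v X Hu Hv) mulx1.
Qed.

Lemma anti x y z : assoc x y z ** assoc z y x = one.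
Proof.
have h1 : (z ** y) ** x = x ** (y ** z) by rewrite mC (mC z y).
have h2 : z ** (y ** x) = (x ** y) ** z by rewrite mC (mC y x).
have := assocP z y x; rewrite h1 h2 (assocP x y z).
rewrite (goodA _ (z2_assoc x y z) (good_assoc z y x)) => H.
by apply: (lcan (x ** (y ** z))); rewrite -H mulx1.
Qed.

Lemma cyc x a d : assoc x a d = assoc x d a ** assoc a x d.
Proof.
have h1 := assocP a x d.
rewrite (mC a x) (assocP x a d) (mC a (x ** d)) (assocP x d a) (mC d a) in h1.
rewrite (goodA _ (z2_assoc x d a) (good_assoc a x d)) in h1.
exact: lcan h1.
Qed.

Inductive tr := At of nat | Nd of tr & tr.
Fixpoint ev (env : seq Q) (e : tr) := match e with At i => nth one env i | Nd a b => ev env a ** ev env b end.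
Fixpoint fl (e : tr) : seq nat := match e with At i => [:: i] | Nd a b => fl a ++ fl b end.
Fixpoint prodr (f : nat -> Q) (l : seq nat) := match l with [::] => one | i :: l => f i ** prodr f l end.

Lemma good_prodr f l : (forall i, good (f i)) -> good (prodr f l).
Proof. by move=> Hf; elim: l => [|i l IH] /=; [exact: good1 | exact: goodM]. Qed.

Lemma prodr_cat f l1 l2 : (forall i, good (f i)) ->
  prodr f (l1 ++ l2) = prodr f l1 ** prodr f l2.
Proof.
move=> Hf; elim: l1 => [|i l IH] /=; first by rewrite mul1x.
by rewrite IH (goodA _ (proj1 (good_prodr f l Hf)) (good_prodr f l2 Hf)).
Qed.

Lemma swap3 a b c : good a -> good b -> good c -> a ** (b ** c) = b ** (a ** c).
Proof.
move=> Ha Hb Hc.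
by rewrite -(goodA a (proj1 Hb) Hc) (mC a b) (goodA b (proj1 Ha) Hc).
Qed.

Lemma prodr_rem {f l i} : (forall i, good (f i)) -> i \in l -> prodr f l = f i ** prodr f (rem i l).
Proof.
move=> Hf; elim: l => [|j l IH] //= Hi.
case: eqP => [-> //|ne].
rewrite in_cons in Hi; case/orP: Hi => [/eqP E|Hi]; first by case: ne.
rewrite IH //= swap3 //; exact: good_prodr.
Qed.

Lemma prodr_perm f l1 l2 : (forall i, good (f i)) -> perm_eq l1 l2 -> prodr f l1 = prodr f l2.
Proof.
move=> Hf; elim: l1 l2 => [|i l1 IH] l2 P.
  by move: (perm_size P) => /=; case: l2 P.
have Hi : i \in l2 by rewrite -(perm_mem P) mem_head.
rewrite (prodr_rem Hf Hi) /=; congr (_ ** _); apply: IH.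
by rewrite -(perm_cons i); apply: (perm_trans P); apply: perm_to_rem.
Qed.

Inductive goodl : seq Q -> Prop :=
| gnil : goodl [::]
| gcons x l : good x -> goodl l -> goodl (x :: l).

Lemma goodl_nth env : goodl env -> forall i, good (nth one env i).
Proof.
elim=> [|x l Hx Hl IH] i; first by rewrite nth_nil; exact: good1.
by case: i => [|i] /=.
Qed.

Lemma ev_fl env (e : tr) : goodl env -> ev env e = prodr (nth one env) (fl e).
Proof.
move=> He; elim: e => [i|e1 IHa e2 IHb] /=; first by rewrite mulx1.
by rewrite prodr_cat ?IHa ?IHb //; apply: goodl_nth.
Qed.

Lemma ac_ok env (e1 e2 : tr) : goodl env -> perm_eq (fl e1) (fl e2) -> ev env e1 = ev env e2.
Proof.
move=> He P; rewrite !ev_fl //; apply: prodr_perm => //; exact: goodl_nth.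
Qed.


Ltac inlist x l := match l with
  | nil => constr:(false)
  | cons x _ => constr:(true)
  | cons _ ?r => inlist x r end.
Ltac collect e l := lazymatch e with
  | @lmul _ ?a ?b => let l1 := collect a l in collect b l1
  | _ => let b := inlist e l in
         lazymatch b with true => l | false => constr:(cons e l) end end.
Ltac idx x l := match l with
  | cons x _ => constr:(O)
  | cons _ ?r => let n := idx x r in constr:(S n) end.
Ltac rf e l := lazymatch e with
  | @lmul _ ?a ?b => let t1 := rf a l in let t2 := rf b l in constr:(Nd t1 t2)
  | _ => let n := idx e l in constr:(At n) end.
Ltac solve_good := first [ exact: good_assoc | assumption | exact: good1 ].
Ltac ac := lazymatch goal with |- ?L = ?R =>
  let T := type of L in
  let l0 := constr:(@nil T) in
  let l1 := collect L l0 in let l := collect R l1 in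
  let e1 := rf L l in let e2 := rf R l in
  change (ev l e1 = ev l e2); apply: ac_ok;
  [ repeat (apply: gcons; [solve_good|]); apply: gnil
  | vm_compute; reflexivity ] end.


Lemma E1 {x c d n} : z2 n -> Rin c d x = x ** n -> assoc x c d = n ** assoc n x (c ** d).
Proof. move=> Hn E; apply: assoc_uniq; rewrite -Rin_spec E mC; exact: (mulZ2 x (c ** d) Hn). Qed.

Lemma A_z2cen {u z} x y : z2 u -> cen z -> assoc (u ** z) x y = assoc u x y.
Proof. by move=> Hu Hz; rewrite (A_lin1 x y Hu (z2_cen z Hz)) (A_cen1 z x y Hz) mulx1. Qed.

Lemma ident1 a b c d :
    assoc (a ** b) c d =
      (assoc a c d ** assoc b c d ** assoc (assoc a c d) a b
         ** assoc (assoc b c d) b a)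
      ** (assoc (assoc a c d) b c ** assoc (assoc b c d) a c
         ** assoc (assoc a c d) b d ** assoc (assoc b c d) a d).
Proof.
case: (Hnil a _ (inner_Rin c d)) => n [/z2_Zc Hn En].
case: (Hnil b _ (inner_Rin c d)) => m [/z2_Zc Hm Em].
case: (Hnil (a ** b) _ (inner_Rin c d)) => k [/z2_Zc Hk Ek].
have Ea := E1 Hn En; have Eb := E1 Hm Em; have Eab := E1 Hk Ek.
have Gn : good n.
  split => //; apply: (killed_div (A_cen a (c ** d) Hn)); rewrite -Ea; exact: killed_assoc.
have Gm : good m.
  split => //; apply: (killed_div (A_cen b (c ** d) Hm)); rewrite -Eb; exact: killed_assoc.
have Hb : assoc n a (b ** m) = assoc n a b.
  by rewrite (A_lin3 n a b m Hn) (K3 n a m Hn (proj2 Gm)) mulx1.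
have Hmz : z2 (m ** assoc m b a) by apply: z2M => //; apply: z2_cen; apply: A_cen.
have Gnz : good (n ** assoc n a b) by apply: goodM => //; apply: good_assoc.
have Hkv : k = (m ** assoc m b a) ** (n ** assoc n a b).
  apply: (lcan (a ** b)); rewrite -Ek Rin_aut En Em.
  rewrite (mulZ2 a (b ** m) Hn) (mC a (b ** m)) (mulZ2 b a Hm) (mC b a) Hb.
  by rewrite (goodA _ Hmz Gnz).
rewrite Eab Hkv Ea Eb (A_lin1 _ _ Hmz (proj1 Gnz)).
rewrite (A_z2cen _ _ Hm (A_cen b a Hm)) (A_z2cen _ _ Hn (A_cen a b Hn)).
rewrite !(A_z2cen _ _ Hm (A_cen b (c ** d) Hm)) !(A_z2cen _ _ Hn (A_cen a (c ** d) Hn)).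
rewrite !(A_lin2 m _ _ _ Hm) !(A_lin2 n _ _ _ Hn) !(A_lin3 m _ _ _ Hm) !(A_lin3 n _ _ _ Hn).
ac.
Qed.


Lemma Kanti p q r x y : assoc (assoc p q r) x y ** assoc (assoc r q p) x y = one.
Proof.
rewrite -(A_lin1 x y (z2_assoc p q r) (z2_assoc r q p)) anti.
exact: (A_cen1 one x y cen1).
Qed.

Lemma ident2 a b c d :
    assoc a b (c ** d) =
      (assoc a b c ** assoc a b d ** assoc (assoc a b c) c d
         ** assoc (assoc a b d) d c)
      ** (assoc (assoc a b c) d b ** assoc (assoc a b d) c b
         ** assoc (assoc a b c) d a ** assoc (assoc a b d) c a).
Proof.
set R2 := (X in _ = X).
suff H : R2 ** assoc (c ** d) b a = one.
  apply: (lcan (assoc (c ** d) b a)).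
  by rewrite (mC (assoc (c ** d) b a) (assoc a b (c ** d))) anti -H mC.
rewrite /R2 (ident1 c d b a).
transitivity ((assoc a b c ** assoc c b a) ** ((assoc a b d ** assoc d b a) **
  ((assoc (assoc a b c) c d ** assoc (assoc c b a) c d) **
  ((assoc (assoc a b d) d c ** assoc (assoc d b a) d c) **
  ((assoc (assoc a b c) d b ** assoc (assoc c b a) d b) **
  ((assoc (assoc a b d) c b ** assoc (assoc d b a) c b) **
  ((assoc (assoc a b c) d a ** assoc (assoc c b a) d a) **
   (assoc (assoc a b d) c a ** assoc (assoc d b a) c a)))))))).
  ac.
by rewrite !Kanti !anti !mulx1.
Qed.

Lemma ident3 a b c d :
    assoc a (b ** c) d =
      (assoc a b d ** assoc a c d ** assoc (assoc a b d) b c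
         ** assoc (assoc a c d) c b)
      ** (assoc (assoc a b d) c a ** assoc (assoc a c d) b a
         ** assoc (assoc a b d) c d ** assoc (assoc a c d) b d).
Proof.
apply: (lcan (assoc (b ** c) d a)).
rewrite -(cyc (b ** c) a d) (ident1 b c a d) (ident1 b c d a) (cyc b a d) (cyc c a d).
rewrite !(A_lin1 _ _ (z2_assoc b d a) (z2_assoc a b d)).
rewrite !(A_lin1 _ _ (z2_assoc c d a) (z2_assoc a c d)).
ac.
Qed.

End CAL.

Theorem proposition2p8 (Q : loop) (Hcomm : commutative_loop Q)
  (Haut : automorphic Q) (Hnil : nilpotency_class Q 3) :
  forall a b c d : Q,
    assoc (a ** b) c d =
      (assoc a c d ** assoc b c d ** assoc (assoc a c d) a b
         ** assoc (assoc b c d) b a)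
      ** (assoc (assoc a c d) b c ** assoc (assoc b c d) a c
         ** assoc (assoc a c d) b d ** assoc (assoc b c d) a d)
    /\
    assoc a b (c ** d) =
      (assoc a b c ** assoc a b d ** assoc (assoc a b c) c d
         ** assoc (assoc a b d) d c)
      ** (assoc (assoc a b c) d b ** assoc (assoc a b d) c b
         ** assoc (assoc a b c) d a ** assoc (assoc a b d) c a)
    /\
    assoc a (b ** c) d =
      (assoc a b d ** assoc a c d ** assoc (assoc a b d) b c
         ** assoc (assoc a c d) c b)
      ** (assoc (assoc a b d) c a ** assoc (assoc a c d) b a
         ** assoc (assoc a b d) c d ** assoc (assoc a c d) b d).
Proof.
move=> a b c d; case: Hnil => _ Hn.
split; first exact: (ident1 Q Hcomm Haut Hn a b c d).
split; first exact: (ident2 Q Hcomm Haut Hn a b c d).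
exact: (ident3 Q Hcomm Haut Hn a b c d).
Qed.
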